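(* In the setting of the context, let $h_0=\max\{y\ge0:\frac{p(m-\sqrt m)}{1-p}\ge yp+\sqrt y\}$, $\beta=0.4215\cdot\frac{p^2+(1-p)^2}{p(1-p)}$, $h_1=h_0(1-p)-\sqrt{p(1-p)h_0}-\frac{\beta}{\sqrt{h_0}}$, and $\overline{\mathcal R_2}=\{(h,\ell):h\ge\max\{h_0,\sqrt m\},\ \ell<\sqrt m\}$. Then $$\inf_{(h,\ell)\in\overline{\mathcal R_2}}\mathbb E_{\mathbf n}\Big[\frac{\mathrm{REW}_A(\mathbf n,\rho;\mathcal G)}{\mathrm{OPT}(\mathbf n)}\Big]\ge\min\Big\{1-\frac1{\sqrt m},\ \frac{h_1}{m}\Big\}.$$
   Context: Setting: $m$ units of a divisible resource; two agent types with mean rewards $r_1>r_2$ in $(0,1)$; integers $h,\ell\ge0$ chosen adversarially; sampling probability $p\in(0,1)$; $s_1\sim\mathrm{Bin}(h,p)$, $s_2\sim\mathrm{Bin}(\ell,p)$ independent; $\mathbf n=(n_1,n_2)=(h-s_1,\ell-s_2)$; $\mathbb E_{\mathbf n}$ denotes expectation over this sampling. $\mathrm{OPT}(\mathbf n)=r_1\min\{n_1,m\}+r_2\min\{n_2,(m-n_1)^+\}$. The algorithm considered protects type 1 with protection level derived from $s_1$ (the case of the ''good event'' $\hat r_1>\hat r_2$, where $\hat r_i$ are empirical mean rewards of sampled agents) on the ordered sequence in which the $n_2$ type 2 agents arrive before the $n_1$ type 1 agents; its reward is $$\mathrm{REW}_A(\mathbf n,\rho;\mathcal G)=\min\Big\{n_2,\Big(m-\tfrac{1-p}{p}s_1\Big)^+\Big\}r_2+\min\Big\{m-\min\Big\{n_2,\Big(m-\tfrac{1-p}{p}s_1\Big)^+\Big\},\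 n_1\Big\}r_1.$$ *)

(* Defs.v *)
From HB Require Import structures.
From mathcomp Require Import all_boot all_order all_algebra.
From mathcomp Require Import reals.
Set Implicit Arguments. Unset Strict Implicit. Unset Printing Implicit Defensive.
Import Order.TTheory GRing.Theory Num.Theory.
Local Open Scope ring_scope.

Section Defs.
Variable R : realType.

Definition pos_part (x : R) : R := Num.max x 0.

Definition OPT (m r1 r2 : R) (n1 n2 : nat) : R :=
  r1 * Num.min n1%:R m + r2 * Num.min n2%:R (pos_part (m - n1%:R)).

Definition alloc2 (m p : R) (s1 n2 : nat) : R :=
  Num.min n2%:R (pos_part (m - (1 - p) / p * s1%:R)).

Definition REW (m p r1 r2 : R) (s1 n1 n2 : nat) : R :=
  alloc2 m p s1 n2 * r2 + Num.min (m - alloc2 m p s1 n2) n1%:R * r1.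

(* ratio REW/OPT, with the convention 0/0 := 1 (OPT = 0 only when no agent
   remains, in which case the algorithm is trivially optimal) *)
Definition ratio (m p r1 r2 : R) (s1 n1 n2 : nat) : R :=
  if OPT m r1 r2 n1 n2 == 0 then 1
  else REW m p r1 r2 s1 n1 n2 / OPT m r1 r2 n1 n2.

Definition binom_pmf (n : nat) (p : R) (k : nat) : R :=
  'C(n, k)%:R * p ^+ k * (1 - p) ^+ (n - k).

(* E_n[ REW/OPT ] where s1 ~ Bin(h,p), s2 ~ Bin(l,p) independent,
   n = (h - s1, l - s2) *)
Definition exp_ratio (m p r1 r2 : R) (h l : nat) : R :=
  \sum_(s1 < h.+1) \sum_(s2 < l.+1)
     binom_pmf h p s1 * binom_pmf l p s2 *
     ratio m p r1 r2 s1 (h - s1) (l - s2).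

End Defs.

(* Main.v *)
Require Import Defs.
From HB Require Import structures.
From mathcomp Require Import all_boot all_order all_algebra.
From mathcomp Require Import reals.
From mathcomp Require Import ring lra.
Import Order.TTheory GRing.Theory Num.Theory.
Local Open Scope ring_scope.

Section Bin.
Variable R : realType.

Lemma bin_sum0 (n : nat) (p : R) : \sum_(k < n.+1) binom_pmf n p k = 1.
Proof.
have := exprDn (1 - p) p n; rewrite subrK expr1n => ->.
apply: eq_bigr => i _; rewrite /binom_pmf -mulr_natl; ring.
Qed.

Lemma bin_shift (n : nat) (p : R) (F : nat -> R) :
  \sum_(k < n.+2) k%:R * F k * binom_pmf n.+1 p k =
  n.+1%:R * p * \sum_(i < n.+1) F i.+1 * binom_pmf n p i.
Proof.
rewrite big_ord_recl /= !mul0r add0r big_distrr /=; apply: eq_bigr => i _.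
rewrite /binom_pmf /bump /= add1n subSS.
have H := mul_bin_diag n.+1 i; rewrite /= in H.
have H' : (i.+1%:R * 'C(n.+1, i.+1)%:R : R) = n.+1%:R * 'C(n, i)%:R.
  by rewrite -!natrM H.
rewrite exprS.
transitivity ((i.+1%:R * 'C(n.+1, i.+1)%:R) * F i.+1 * (p * p ^+ i) * (1 - p) ^+ (n - i)); first ring.
rewrite H'; ring.
Qed.

Lemma bin_sum1 (n : nat) (p : R) : \sum_(k < n.+1) k%:R * binom_pmf n p k = n%:R * p.
Proof.
case: n => [|n]; first by rewrite big_ord1 mul0r mul0r.
have := bin_shift n p (fun _ => 1).
under eq_bigr do rewrite mulr1.
move=> ->; under eq_bigr do rewrite mul1r.
by rewrite bin_sum0 mulr1.
Qed.

Lemma bin_sum2 (n : nat) (p : R) :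
  \sum_(k < n.+1) k%:R ^+ 2 * binom_pmf n p k = n%:R * p * (1 - p) + (n%:R * p) ^+ 2.
Proof.
case: n => [|n]; first by rewrite big_ord1 /= !mul0r expr0n /= mul0r addr0.
have := bin_shift n p (fun k => k%:R).
under eq_bigr do rewrite -expr2.
move=> ->.
under eq_bigr do rewrite -addn1 natrD mulrDl mul1r.
rewrite big_split /= bin_sum1 bin_sum0.
rewrite -addn1 natrD; ring.
Qed.

Lemma minF (x y : R) : Num.min x y <= x /\ Num.min x y <= y /\ (Num.min x y = x \/ Num.min x y = y).
Proof.
rewrite minEle; case: (leP x y) => H.
- by split; [rewrite lexx|split; [|left]].
- by split; [exact: ltW|split; [rewrite lexx|right]].
Qed.

Lemma maxF (x y : R) : x <= Num.max x y /\ y <= Num.max x y /\ (Num.max x y = x \/ Num.max x y = y).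
Proof.
rewrite maxEle; case: (leP x y) => H.
- by split; [|split; [rewrite lexx|right]].
- by split; [rewrite lexx|split; [exact: ltW|left]].
Qed.

Lemma pmf_ge0 n (p : R) k : 0 < p -> p < 1 -> 0 <= binom_pmf n p k.
Proof.
move=> p0 p1; rewrite /binom_pmf; apply: mulr_ge0; first apply: mulr_ge0.
- exact: ler0n.
- apply: exprn_ge0; lra.
- apply: exprn_ge0; lra.
Qed.

Lemma ratio_lb (M p r1 r2 t : R) (s1 n1 n2 : nat) :
  0 < M -> 0 < r2 -> r2 < r1 -> 0 < p -> p < 1 -> 0 <= t -> t <= M - n2%:R ->
  Num.min t n1%:R / M <= Defs.ratio M p r1 r2 s1 n1 n2.
Proof.
move=> M0 r20 r21 p0 p1 t0 tM.
have N1 : 0 <= (n1%:R : R) := ler0n R n1.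
have N2 : 0 <= (n2%:R : R) := ler0n R n2.
set N1r := (n1%:R : R) in N1 tM *; set N2r := (n2%:R : R) in N2 tM *.
rewrite /Defs.ratio /REW /OPT.
set a := alloc2 M p s1 n2.
have [a0 aN2] : 0 <= a /\ a <= N2r.
  rewrite /a /alloc2 /pos_part.
  have [m1 [m2 m3]] := minF N2r (Num.max (M - (1 - p) / p * s1%:R) 0).
  have [x1 [x2 x3]] := maxF (M - (1 - p) / p * s1%:R) 0.
  split; last done.
  by case: m3 => ->; lra.
have [g1 [g2 g3]] := minF t N1r.
have [b1 [b2 b3]] := minF (M - a) N1r.
have [o11 [o12 o13]] := minF N1r M.
have [x1 [x2 x3]] := maxF (M - N1r) 0.
have [o21 [o22 o23]] := minF N2r (pos_part (M - N1r)).
rewrite /pos_part in o21 o22 o23.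
rewrite /pos_part.
set g := Num.min t N1r in g1 g2 g3 *.
set b := Num.min (M - a) N1r in b1 b2 b3 *.
set o1 := Num.min N1r M in o11 o12 o13 *.
set mx := Num.max (M - N1r) 0 in x1 x2 x3 o21 o22 o23 *.
set o2 := Num.min N2r mx in o21 o22 o23 *.
have g0 : 0 <= g by case: g3 => ->; lra.
have bg : g <= b by case: b3 => ->; lra.
have o10 : 0 <= o1 by case: o13 => ->; lra.
have o20 : 0 <= o2 by case: o23 => ->; lra.
have o1mx : o1 + mx <= M by case: x3 => ->; lra.
have OPTle : r1 * o1 + r2 * o2 <= r1 * M by nra.
have OPTge : 0 <= r1 * o1 + r2 * o2 by nra.
have REWge : r1 * g <= a * r2 + b * r1 by nra.
case: ifP => [/eqP HO|/negbT HO].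
  rewrite ler_pdivrMr // mul1r; lra.
have HO' : 0 < r1 * o1 + r2 * o2 by rewrite lt_def HO OPTge.
rewrite ler_pdivlMr // mulrAC ler_pdivrMr //.
nra.
Qed.

Lemma bin_quad n (p al be ga : R) :
  \sum_(k < n.+1) binom_pmf n p k * (al + be * k%:R + ga * k%:R ^+ 2) =
  al + be * (n%:R * p) + ga * (n%:R * p * (1 - p) + (n%:R * p) ^+ 2).
Proof.
under eq_bigr do rewrite !mulrDr.
rewrite !big_split /=.
have E1 : \sum_(i < n.+1) binom_pmf n p i * al = al.
  by rewrite -big_distrl /= bin_sum0 mul1r.
have E2 : \sum_(i < n.+1) binom_pmf n p i * (be * i%:R) = be * (n%:R * p).
  by rewrite -bin_sum1 big_distrr; apply: eq_bigr => i _ /=; ring.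
have E3 : \sum_(i < n.+1) binom_pmf n p i * (ga * i%:R ^+ 2) =
   ga * (n%:R * p * (1 - p) + (n%:R * p) ^+ 2).
  by rewrite -bin_sum2 big_distrr; apply: eq_bigr => i _ /=; ring.
by rewrite E1 E2 E3.
Qed.

Lemma key_alg (p q c s S w V be : R) :
  0 < p -> 0 < q -> 1 / 18 <= c -> 0 < s -> s <= S -> 0 < w -> w ^+ 2 = p * q ->
  w <= 1 / 2 -> V * s = be -> be * w ^+ 2 = c * (p ^+ 2 + q ^+ 2) -> 0 < V ->
  S ^+ 2 * w ^+ 2 <= (w * s + V) * (2 * (S * w + (S ^+ 2 - s ^+ 2) * q)).
Proof.
move=> p0 q0 c0 s0 sS w0 w2 wh Vs bew V0.
have S0 : 0 < S by exact: (lt_le_trans s0 sS).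
have HS : 0 <= S ^+ 2 - s ^+ 2 by have := ler_pM (ltW s0) (ltW s0) sS sS; rewrite -!expr2; lra.
have Xq : 0 <= (S ^+ 2 - s ^+ 2) * q by apply: mulr_ge0 => //; lra.
have Sw : 0 < S * w by apply: mulr_gt0.
case: (leP S (2 * s)) => hS.
  have A : S ^+ 2 * w ^+ 2 <= w * s * (2 * (S * w)).
    have : 0 <= S * w ^+ 2 * (2 * s - S).
      apply: mulr_ge0; last lra.
      apply: mulr_ge0; [lra| exact: sqr_ge0].
    move=> HH; have -> : w * s * (2 * (S * w)) = S ^+ 2 * w ^+ 2 + S * w ^+ 2 * (2 * s - S) by ring.
    lra.
  have B : w * s * (2 * (S * w)) <= w * s * (2 * (S * w + (S ^+ 2 - s ^+ 2) * q)).
    apply: ler_wpM2l; first by apply: mulr_ge0; lra.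
    lra.
  have C : 0 <= V * (2 * (S * w + (S ^+ 2 - s ^+ 2) * q)).
    apply: mulr_ge0; lra.
  have -> : (w * s + V) * (2 * (S * w + (S ^+ 2 - s ^+ 2) * q)) =
     w * s * (2 * (S * w + (S ^+ 2 - s ^+ 2) * q)) + V * (2 * (S * w + (S ^+ 2 - s ^+ 2) * q)) by ring.
  lra.
have be0 : 0 <= be by rewrite -Vs; apply: mulr_ge0; lra.
have wbe : 2 * c * p ^+ 2 <= w * be.
  have h1 : c * p ^+ 2 <= be * w ^+ 2.
    rewrite bew; apply: ler_wpM2l; first lra.
    have := sqr_ge0 q; lra.
  have h2 : be * w ^+ 2 <= be * w * (1 / 2).
    rewrite expr2 mulrA; apply: ler_wpM2l => //; apply: mulr_ge0; lra.
  lra.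
have sq : (2 * p / 3) ^+ 2 <= (w * s + V) ^+ 2.
  have h3 : 4 * (w * s) * V <= (w * s + V) ^+ 2.
    have := sqr_ge0 (w * s - V).
    have -> : (w * s + V) ^+ 2 = (w * s - V) ^+ 2 + 4 * (w * s) * V by ring.
    lra.
  have h4 : (w * s) * V = w * be by rewrite -Vs; ring.
  have h5 : (2 * p / 3) ^+ 2 = 4 / 9 * p ^+ 2 by field.
  have h6 : 0 <= p ^+ 2 := sqr_ge0 p.
  have : 4 / 9 * p ^+ 2 <= 8 * c * p ^+ 2.
    apply: ler_wpM2r => //; lra.
  lra.
have wV : 2 * p / 3 <= w * s + V.
  have H1 : 0 < w * s by apply: mulr_gt0.
  have H0 : 0 <= w * s + V by lra.
  have H2 : 0 <= 2 * p / 3 by apply: divr_ge0; lra.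
  by rewrite -(ler_pXn2r (n := 2)) // ?inE ?nnegrE.
have D : 3 / 2 * S ^+ 2 * q <= 2 * (S * w + (S ^+ 2 - s ^+ 2) * q).
  have : 4 * s ^+ 2 <= S ^+ 2.
    have := ler_pM (ltW (mulr_gt0 (ltr0Sn R 1) s0)) (ltW (mulr_gt0 (ltr0Sn R 1) s0)) (ltW hS) (ltW hS).
    rewrite -!expr2. have -> : (2 * s) ^+ 2 = 4 * s ^+ 2 by ring. by [].
  move=> H4.
  have : 0 <= (S ^+ 2 - 4 * s ^+ 2) * q by apply: mulr_ge0 => //; lra.
  have -> : 2 * (S * w + (S ^+ 2 - s ^+ 2) * q) = 3 / 2 * S ^+ 2 * q + 2 * S * w + (S ^+ 2 - 4 * s ^+ 2) * q / 2 by field.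
  lra.
have : 2 * p / 3 * (3 / 2 * S ^+ 2 * q) <= (w * s + V) * (2 * (S * w + (S ^+ 2 - s ^+ 2) * q)).
  apply: ler_pM => //.
    apply: mulr_ge0; lra.
  apply: mulr_ge0; [apply: mulr_ge0; [lra|exact: sqr_ge0]|lra].
have -> : S ^+ 2 * w ^+ 2 = 2 * p / 3 * (3 / 2 * S ^+ 2 * q) by rewrite w2; field.
by [].
Qed.

Lemma key (p h0 H : R) : 0 < p -> p < 1 -> 0 < h0 -> h0 <= H ->
  H * p * (1 - p) / (2 * (Num.sqrt (H * p * (1 - p)) + (H - h0) * (1 - p))) <=
  Num.sqrt (p * (1 - p) * h0) +
    4215 / 10000 * ((p ^+ 2 + (1 - p) ^+ 2) / (p * (1 - p))) / Num.sqrt h0.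
Proof.
move=> p0 p1 h00 hH.
have q0 : 0 < 1 - p by lra.
have H0 : 0 < H by exact: (lt_le_trans h00 hH).
have pq0 : 0 < p * (1 - p) by apply: mulr_gt0.
have c18 : 1 / 18 <= (4215 / 10000 : R) by lra.
have s0 : 0 < Num.sqrt h0 by rewrite sqrtr_gt0.
have sS : Num.sqrt h0 <= Num.sqrt H by rewrite ler_sqrt // ltW.
have w0 : 0 < Num.sqrt (p * (1 - p)) by rewrite sqrtr_gt0.
have w2 : Num.sqrt (p * (1 - p)) ^+ 2 = p * (1 - p) by rewrite sqr_sqrtr // ltW.
have wh : Num.sqrt (p * (1 - p)) <= 1 / 2.
  have : Num.sqrt (p * (1 - p)) ^+ 2 <= 1 / 4 by rewrite w2; have := sqr_ge0 (p - 1 / 2); nra.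
  move=> H4; nra.
set be := 4215 / 10000 * ((p ^+ 2 + (1 - p) ^+ 2) / (p * (1 - p))).
have bew : be * Num.sqrt (p * (1 - p)) ^+ 2 = 4215 / 10000 * (p ^+ 2 + (1 - p) ^+ 2).
  by rewrite w2 /be -mulrA mulfVK // gt_eqF.
have be0 : 0 < be.
  rewrite /be; apply: mulr_gt0; first by apply: divr_gt0; rewrite ltr0n.
  apply: divr_gt0 => //; apply: ltr_wpDr; [exact: sqr_ge0|exact: exprn_gt0].
have Vs : be / Num.sqrt h0 * Num.sqrt h0 = be by rewrite mulfVK // gt_eqF.
have V0 : 0 < be / Num.sqrt h0 by rewrite divr_gt0.
have K := @key_alg _ _ _ _ _ _ _ be p0 q0 c18 s0 sS w0 w2 wh Vs bew V0.
rewrite (sqr_sqrtr (ltW H0)) (sqr_sqrtr (ltW h00)) w2 in K.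
have E1 : Num.sqrt (H * p * (1 - p)) = Num.sqrt H * Num.sqrt (p * (1 - p))
  by rewrite -mulrA sqrtrM // ltW.
have E2 : Num.sqrt (p * (1 - p) * h0) = Num.sqrt (p * (1 - p)) * Num.sqrt h0
  by rewrite sqrtrM // ltW.
have e0 : 0 < Num.sqrt H * Num.sqrt (p * (1 - p)) + (H - h0) * (1 - p).
  apply: ltr_wpDr; first by apply: mulr_ge0; [rewrite subr_ge0|exact: ltW].
  by apply: mulr_gt0 => //; exact: (lt_le_trans s0 sS).
rewrite E1 E2 ler_pdivrMr; last by rewrite mulr_gt0.
by move: K; rewrite [H * (p * _)]mulrA.
Qed.

Lemma min_quad (t x e : R) : 0 < e -> t - (t - x + e) ^+ 2 / (4 * e) <= Num.min t x.
Proof.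
move=> e0.
have e4 : 0 < 4 * e by apply: mulr_gt0.
have A : 0 <= (t - x + e) ^+ 2 / (4 * e) by apply: divr_ge0; [exact: sqr_ge0|exact: ltW].
have B : t - x <= (t - x + e) ^+ 2 / (4 * e).
  rewrite ler_pdivlMr //.
  have := sqr_ge0 (t - x - e).
  have -> : (t - x + e) ^+ 2 = (t - x - e) ^+ 2 + (t - x) * (4 * e) by ring.
  lra.
rewrite le_min; apply/andP; split; lra.
Qed.
End Bin.

Theorem lemma6 (R : realType) (m : nat) (r1 r2 p h0 : R) :
  (0 < m)%N ->
  0 < r2 -> r2 < r1 -> r1 < 1 ->
  0 < p -> p < 1 ->
  (* h0 = max { y >= 0 : p (m - sqrt m) / (1 - p) >= y p + sqrt y } *)
  0 <= h0 ->
  p * ((m%:R : R) - Num.sqrt (m%:R : R)) / (1 - p) >= h0 * p + Num.sqrt h0 ->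
  (forall y : R, 0 <= y ->
     p * ((m%:R : R) - Num.sqrt (m%:R : R)) / (1 - p) >= y * p + Num.sqrt y -> y <= h0) ->
  let beta := 4215 / 10000 * ((p ^+ 2 + (1 - p) ^+ 2) / (p * (1 - p))) in
  let h1 := h0 * (1 - p) - Num.sqrt (p * (1 - p) * h0) - beta / Num.sqrt h0 in
  forall h l : nat,
    Num.max h0 (Num.sqrt (m%:R : R)) <= h%:R ->
    l%:R < Num.sqrt (m%:R : R) ->
    exp_ratio (m%:R : R) p r1 r2 h l >=
      Num.min (1 - 1 / Num.sqrt (m%:R : R)) (h1 / (m%:R : R)).
Proof.
move=> m0 r20 r21 r11 p0 p1 h00 hyp _ beta h1 h l Hh Hl.
have M1 : (1 : R) <= m%:R by rewrite ler1n.
set M := (m%:R : R) in M1 hyp Hh Hl *.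
have M0 : 0 < M by exact: (lt_le_trans ltr01 M1).
have hh0 : h0 <= h%:R by move: Hh; rewrite ge_max => /andP[].
have q0 : 0 < 1 - p by rewrite subr_gt0.
have t0 : 0 <= h0 * (1 - p) by apply: mulr_ge0 => //; exact: ltW.
have tK : h0 * (1 - p) <= M - Num.sqrt M.
  move: hyp; rewrite ler_pdivlMr // => hyp'.
  have X : 0 <= Num.sqrt h0 * (1 - p) by apply: mulr_ge0; [exact: sqrtr_ge0|exact: ltW].
  have : 0 <= p * (M - Num.sqrt M - h0 * (1 - p)).
    have -> : p * (M - Num.sqrt M - h0 * (1 - p)) =
      (p * (M - Num.sqrt M) - (h0 * p + Num.sqrt h0) * (1 - p)) + Num.sqrt h0 * (1 - p) by ring.
    by apply: addr_ge0 => //; rewrite subr_ge0.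
  by rewrite pmulr_rge0 // subr_ge0.
have A : (\sum_(i < h.+1) binom_pmf h p i * Num.min (h0 * (1 - p)) (h - i)%:R) / M
    <= exp_ratio M p r1 r2 h l.
  rewrite mulr_suml /exp_ratio; apply: ler_sum => i _.
  apply: (@le_trans _ _ (\sum_(j < l.+1) binom_pmf h p i * (Num.min (h0 * (1 - p)) (h - i)%:R / M) * binom_pmf l p j)).
    by rewrite -big_distrr /= bin_sum0 mulr1 mulrA.
  apply: ler_sum => j _.
  have -> : binom_pmf h p i * (Num.min (h0 * (1 - p)) (h - i)%:R / M) * binom_pmf l p j =
    binom_pmf h p i * binom_pmf l p j * (Num.min (h0 * (1 - p)) (h - i)%:R / M) by ring.
  apply: ler_wpM2l; first by apply: mulr_ge0; apply: pmf_ge0.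
  apply: ratio_lb => //.
  have : ((l - j)%:R : R) <= l%:R by rewrite ler_nat leq_subr.
  lra.
move: h00; rewrite le_eqVlt => /orP[/eqP h0z|h0p].
  have h1z : h1 = 0 by rewrite /h1 -h0z mul0r mulr0 sqrtr0 invr0 mulr0 !subr0.
  apply: le_trans (_ : h1 / M <= _); first by rewrite ge_min lexx orbT.
  rewrite h1z mul0r; apply: le_trans A; apply: divr_ge0; last exact: ltW.
  apply: sumr_ge0 => i _; apply: mulr_ge0; first exact: pmf_ge0.
  by rewrite le_min t0 ler0n.
set t := h0 * (1 - p) in t0 tK A *.
set H := (h%:R : R) in Hh hh0 *.
have H0 : 0 < H by exact: (lt_le_trans h0p hh0).
have Hpq : 0 < H * p * (1 - p) by rewrite mulr_gt0 // mulr_gt0.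
set sg := Num.sqrt (H * p * (1 - p)).
have sg0 : 0 < sg by rewrite /sg sqrtr_gt0.
have sg2 : sg ^+ 2 = H * p * (1 - p) by rewrite /sg sqr_sqrtr // ltW.
set e := sg + (H - h0) * (1 - p).
have e0 : 0 < e.
  rewrite /e; apply: ltr_wpDr => //; apply: mulr_ge0; [by rewrite subr_ge0|exact: ltW].
have en : e != 0 by rewrite gt_eqF.
have B : t - H * p * (1 - p) / (2 * e) <=
    \sum_(i < h.+1) binom_pmf h p i * Num.min t (h - i)%:R.
  apply: (@le_trans _ _ (\sum_(i < h.+1) binom_pmf h p i *
     ((t - (t - H + e) ^+ 2 / (4 * e)) + (- (2 * (t - H + e)) / (4 * e)) * i%:R
      + (- 1 / (4 * e)) * i%:R ^+ 2))).
    rewrite bin_quad.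
    have hc : t - H + e = sg - H * p by rewrite /e /t; ring.
    rewrite hc.
    have -> : t - (sg - H * p) ^+ 2 / (4 * e) + - (2 * (sg - H * p)) / (4 * e) * (h%:R * p) +
      - 1 / (4 * e) * (h%:R * p * (1 - p) + (h%:R * p) ^+ 2) =
      t - (sg ^+ 2 + H * p * (1 - p)) / (4 * e) by rewrite /H; field.
    rewrite sg2.
    have -> : (H * p * (1 - p) + H * p * (1 - p)) / (4 * e) = H * p * (1 - p) / (2 * e) by field.
    by [].
  apply: ler_sum => i _; apply: ler_wpM2l; first exact: pmf_ge0.
  have hi : (i <= h)%N by rewrite -ltnS.
  rewrite natrB // -/H.
  have -> : t - (t - H + e) ^+ 2 / (4 * e) + - (2 * (t - H + e)) / (4 * e) * i%:R +
      - 1 / (4 * e) * i%:R ^+ 2 = t - (t - (H - i%:R) + e) ^+ 2 / (4 * e) by field.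
  exact: min_quad.
have K := @key R p h0 H p0 p1 h0p hh0.
apply: le_trans (_ : h1 / M <= _); first by rewrite ge_min lexx orbT.
apply: le_trans A; apply: ler_wpM2r; first by rewrite invr_ge0 ltW.
apply: le_trans B.
rewrite /h1 -/t -/beta.
move: K; rewrite -/sg -/e -/beta => K.
lra.
Qed.
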